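(* Let $R$ be a finite Frobenius ring, let $\mathrm{soc}(R)$ denote its socle and $\mathrm{rad}(R)$ its Jacobson radical, and let $\psi:\mathrm{soc}(R)\to R/\mathrm{rad}(R)$ be an isomorphism of left $R$-modules. Let $\tilde{\omega}$ be the normalized homogeneous weight on the ring $R/\mathrm{rad}(R)$. Then the normalized homogeneous weight $\omega$ on $R$ is given by \[ \omega(x)=\begin{cases}\tilde{\omega}(\psi(x)), & x\in\mathrm{soc}(R),\\ 1, & x\notin \mathrm{soc}(R).\end{cases} \]
   Context: A finite ring $R$ (with identity) is Frobenius if ${}_R\mathrm{soc}({}_RR)\cong {}_R(R/\mathrm{rad}(R))$ as left $R$-modules (equivalently the right-sided version); for Frobenius rings the left and right socles coincide and are denoted $\mathrm{soc}(R)$. $R/\mathrm{rad}(R)$ is again a finite Frobenius (semisimple) ring. The normalized homogeneous weight on a finite Frobenius ring $R$ is the unique map $\omega:R\to\mathbb{R}$ with $\omega(0)=0$, $\omega(x)=\omega(y)$ whenever $Rx=Ry$, and $\sum_{y\in Rx}\omega(y)=|Rx|$ for every $x\in R\setminus\{0\}$. *)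

(* Defs.v *)
From HB Require Import structures.
From mathcomp Require Import all_boot all_order all_algebra.
From mathcomp Require Import reals.
Set Implicit Arguments. Unset Strict Implicit. Unset Printing Implicit Defensive.
Import Order.TTheory GRing.Theory Num.Theory.
Local Open Scope ring_scope.

Section RingNotions.
Variable R : finNzRingType.

Definition lideal (I : {set R}) : bool :=
  [&& (0 : R) \in I,
      [forall x in I, forall y in I, x + y \in I] &
      [forall r : R, forall x in I, r * x \in I]].

Definition lprinc (x : R) : {set R} := [set r * x | r : R].

Definition minimal_lideal (I : {set R}) : bool :=
  [&& lideal I, I != [set 0] &
      [forall J : {set R}, (lideal J && (J \subset I) && (J != [set 0]))
                            ==> (J == I)]].

Definition maximal_lideal (I : {set R}) : bool :=
  [&& lideal I, I != [set: R] &
      [forall J : {set R}, (lideal J && (I \subset J) && (J != [set: R]))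
                            ==> (J == I)]].

Definition rad : {set R} :=
  \bigcap_(I : {set R} | maximal_lideal I) I.

(* (left) socle: the sum of all minimal left ideals, i.e. the smallest
   left ideal containing every minimal left ideal *)
Definition soc : {set R} :=
  \bigcap_(J : {set R} | lideal J &&
        [forall I : {set R}, minimal_lideal I ==> (I \subset J)]) J.

(* [pi : R -> S] presents S as the quotient ring R / rad(R) *)
Definition is_quotient_by_rad (S : finNzRingType) (pi : {rmorphism R -> S})
  : Prop :=
  (forall s : S, exists x : R, pi x = s) /\ (forall x : R, (pi x == 0) = (x \in rad)).

(* psi : soc(R) -> S is an isomorphism of left R-modules, where S = R/rad(R)
   carries the left R-module structure r . s = pi r * s *)
Definition soc_iso (S : finNzRingType) (pi : {rmorphism R -> S})
  (psi : R -> S) : Prop :=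
  [/\ forall x y, x \in soc -> y \in soc -> psi (x + y) = psi x + psi y,
      forall r x, x \in soc -> psi (r * x) = pi r * psi x,
      {in soc &, injective psi} &
      psi @: soc = [set: S]].

(* R is Frobenius: soc(_R R) is isomorphic to R/rad(R) as left R-modules *)
Definition frobenius : Prop :=
  exists (S : finNzRingType) (pi : {rmorphism R -> S}) (psi : R -> S),
    is_quotient_by_rad pi /\ soc_iso pi psi.

Definition is_hom_weight (F : realType) (w : R -> F) : Prop :=
  [/\ w 0 = 0,
      (forall x y, lprinc x = lprinc y -> w x = w y) &
      (forall x, x != 0 -> \sum_(y in lprinc x) w y = (#|lprinc x|)%:R)].

End RingNotions.

(* Main.v *)
Require Import Defs.
From HB Require Import structures.
From mathcomp Require Import all_boot all_order all_algebra.
From mathcomp Require Import reals.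
Import Order.TTheory GRing.Theory Num.Theory.
Set Implicit Arguments. Unset Strict Implicit. Unset Printing Implicit Defensive.
Local Open Scope ring_scope.

Section Gen.
Variable R : finNzRingType.
Implicit Types (I J K L M : {set R}) (x y : R).

Lemma lidealP I : reflect [/\ (0:R) \in I, (forall x y, x \in I -> y \in I -> x + y \in I)
   & (forall r x, x \in I -> r * x \in I)] (lideal I).
Proof.
rewrite /lideal; apply: (iffP and3P) => [[H0 /forallP Ha /forallP Hm]|[H0 Ha Hm]]; split => //.
- by move=> x y xI yI; move: (Ha x); rewrite xI /= => /forallP/(_ y); rewrite yI.
- by move=> r x xI; move: (Hm r) => /forallP/(_ x); rewrite xI.
- by apply/forallP => x; apply/implyP => xI; apply/forallP => y; apply/implyP; apply: Ha.
- by apply/forallP => r; apply/forallP => x; apply/implyP; apply: Hm.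
Qed.

Lemma lideal0 I : lideal I -> (0:R) \in I.
Proof. by case/lidealP. Qed.
Lemma lidealD I x y : lideal I -> x \in I -> y \in I -> x + y \in I.
Proof. by case/lidealP=> _ H _; apply: H. Qed.
Lemma lidealM I r x : lideal I -> x \in I -> r * x \in I.
Proof. by case/lidealP=> _ _ H; apply: H. Qed.
Lemma lidealN I x : lideal I -> x \in I -> - x \in I.
Proof. by move=> lI xI; rewrite -mulN1r lidealM. Qed.
Lemma lidealB I x y : lideal I -> x \in I -> y \in I -> x - y \in I.
Proof. by move=> lI xI yI; rewrite lidealD // lidealN. Qed.

Lemma lprinc_self x : x \in lprinc x.
Proof. by apply/imsetP; exists 1; rewrite ?mul1r. Qed.

Lemma lprincP x y : reflect (exists r, y = r * x) (y \in lprinc x).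
Proof.
by apply: (iffP imsetP) => [[r _ ->]|[r ->]]; exists r.
Qed.

Lemma lideal_lprinc x : lideal (lprinc x).
Proof.
apply/lidealP; split.
- by apply/lprincP; exists 0; rewrite mul0r.
- by move=> a b /lprincP[r ->] /lprincP[s ->]; apply/lprincP; exists (r + s); rewrite mulrDl.
- by move=> r a /lprincP[s ->]; apply/lprincP; exists (r * s); rewrite mulrA.
Qed.

Lemma lprinc_sub I x : lideal I -> x \in I -> lprinc x \subset I.
Proof. by move=> lI xI; apply/subsetP => y /lprincP[r ->]; apply: lidealM. Qed.

Lemma lideal_bigcap (P : pred {set R}) :
  (forall J, P J -> lideal J) -> lideal (\bigcap_(J | P J) J).
Proof.
move=> H; apply/lidealP; split.
- by apply/bigcapP => J /H /lideal0.
- by move=> x y /bigcapP Hx /bigcapP Hy; apply/bigcapP => J PJ; apply: lidealD (H _ PJ) (Hx _ PJ) (Hy _ PJ).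
- by move=> r x /bigcapP Hx; apply/bigcapP => J PJ; apply: lidealM (H _ PJ) (Hx _ PJ).
Qed.

Lemma lideal_setI I J : lideal I -> lideal J -> lideal (I :&: J).
Proof.
move=> lI lJ; apply/lidealP; split.
- by rewrite inE !lideal0.
- by move=> x y; rewrite !inE => /andP[? ?] /andP[? ?]; rewrite !lidealD.
- by move=> r x; rewrite !inE => /andP[? ?]; rewrite !lidealM.
Qed.

Lemma nonzero_set I : lideal I -> I != [set 0] -> exists2 y, y \in I & y != 0.
Proof.
move=> lI I0; suff /existsP[y /andP[yI y0]] : [exists y, (y \in I) && (y != 0)] by exists y.
apply: contraR I0 => /existsPn Hn; rewrite eqEsubset sub1set lideal0 // andbT.
by apply/subsetP => y yI; rewrite inE; move: (Hn y); rewrite yI /= negbK.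
Qed.

Lemma min_lideal_in I : lideal I -> I != [set 0] ->
  exists L, [/\ lideal L, L \subset I, L != [set 0] &
    forall K, lideal K -> K \subset I -> K != [set 0] -> (#|L| <= #|K|)%N ].
Proof.
move=> lI I0.
pose P := fun K : {set R} => [&& lideal K, K \subset I & K != [set 0]].
have PI : P I by rewrite /P lI subxx I0.
case: (arg_minnP (fun K => #|K|) PI) => L /and3P[lL LI L0] Hmin.
exists L; split => // K lK KI K0; apply: Hmin; by rewrite /P lK KI K0.
Qed.

Lemma min_lideal_exists I : lideal I -> I != [set 0] ->
  exists2 L, minimal_lideal L & L \subset I.
Proof.
move=> lI I0; have [L [lL LI L0 Hm]] := min_lideal_in lI I0.
exists L => //; apply/and3P; split => //; apply/forallP => J; apply/implyP.
case/andP => /andP[lJ JL] J0; rewrite eqEcard JL /=.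
by apply: Hm => //; apply: subset_trans LI.
Qed.

Lemma sqzero_sub_max L M : lideal L -> (forall a b, a \in L -> b \in L -> a * b = 0) ->
  maximal_lideal M -> L \subset M.
Proof.
move=> lL Hsq /and3P[lM MT /forallP Hmax]; apply/subsetP => l lL'.
apply: contraT => lM'.
pose N := [set z : R | [exists s : R, z - s * l \in M]].
have lN : lideal N.
  apply/lidealP; split.
  - by rewrite inE; apply/existsP; exists 0; rewrite mul0r subr0 lideal0.
  - move=> x y; rewrite !inE => /existsP[s Hs] /existsP[t Ht]; apply/existsP; exists (s + t).
    have -> : x + y - (s + t) * l = (x - s * l) + (y - t * l).
      by rewrite mulrDl opprD addrACA.
    exact: lidealD.
  - move=> r x; rewrite !inE => /existsP[s Hs]; apply/existsP; exists (r * s).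
    by rewrite -mulrA -mulrBr lidealM.
have MN : M \subset N.
  by apply/subsetP => m mM; rewrite inE; apply/existsP; exists 0; rewrite mul0r subr0.
have lN' : l \in N by rewrite inE; apply/existsP; exists 1; rewrite mul1r subrr lideal0.
have NT : N = [set: R].
  apply/eqP; apply: contraT => NT; move: (Hmax N); rewrite lN MN NT /= => /eqP NM.
  by move: lN'; rewrite NM (negbTE lM').
have : (1:R) \in N by rewrite NT inE.
rewrite inE => /existsP[s Hs].
have E : l = l * (1 - s * l) + l * (s * l) by rewrite -mulrDr subrK mulr1.
have : l \in M by rewrite E (Hsq l (s * l)) // ?addr0 ?lidealM.
by rewrite (negbTE lM').
Qed.

Section RadZero.
Hypothesis rad0 : forall s : R, (forall M, maximal_lideal M -> s \in M) -> s = 0.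

Lemma idem_in I : lideal I -> I != [set 0] -> exists e, [/\ e \in I, e * e = e & e != 0].
Proof.
move=> lI I0; have [L [lL LI L0 Hm]] := min_lideal_in lI I0.
have /existsP[b /existsP[a /and3P[bL aL ba0]]] :
    [exists b, exists a, [&& b \in L, a \in L & b * a != 0]].
  apply: contraR L0 => Hn; rewrite eqEsubset sub1set lideal0 // andbT.
  apply/subsetP => l lL'; rewrite inE; apply/eqP/rad0 => M maxM.
  suff /subsetP : L \subset M by apply.
  apply: sqzero_sub_max lL _ maxM.
  move=> x y xL yL; apply/eqP; move: Hn => /existsPn/(_ x)/existsPn/(_ y).
  by rewrite xL yL /= negbK.
pose La := [set l * a | l in L].
have lLa : lideal La.
  apply/lidealP; split.
  - by apply/imsetP; exists 0; rewrite ?mul0r ?lideal0.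
  - move=> x y /imsetP[u uL ->] /imsetP[v vL ->]; apply/imsetP; exists (u + v); rewrite ?mulrDl //.
    exact: lidealD.
  - move=> r x /imsetP[u uL ->]; apply/imsetP; exists (r * u); rewrite ?mulrA //; exact: lidealM.
have LaL : La \subset L by apply/subsetP => x /imsetP[u uL ->]; apply: lidealM.
have La0 : La != [set 0].
  apply/negP => /eqP E; have : b * a \in La by apply/imsetP; exists b.
  by rewrite E inE (negbTE ba0).
have LaE : La = L.
  by apply/eqP; rewrite eqEcard LaL /=; apply: Hm => //; apply: subset_trans LI.
have : a \in La by rewrite LaE.
case/imsetP => e eL ea.
pose K := [set l in L | l * a == 0].
have lK : lideal K.
  apply/lidealP; split.
  - by rewrite inE lideal0 // mul0r eqxx.
  - move=> x y; rewrite !inE => /andP[xL /eqP xa] /andP[yL /eqP ya].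
    by rewrite (lidealD lL xL yL) mulrDl xa ya addr0 eqxx.
  - move=> r x; rewrite !inE => /andP[xL /eqP xa].
    by rewrite (lidealM r lL xL) -mulrA xa mulr0 eqxx.
have K0 : K = [set 0].
  apply/eqP; apply: contraT => K0.
  have KL : K \subset L by apply/subsetP => x; rewrite inE => /andP[].
  have : K == L by rewrite eqEcard KL /=; apply: Hm => //; apply: subset_trans LI.
  move/eqP => KE; move: bL; rewrite -KE inE => /andP[_]; by rewrite (negbTE ba0).
have eeK : e * e - e \in K.
  by rewrite inE (lidealB lL (lidealM e lL eL) eL) mulrBl -mulrA -ea -ea subrr eqxx.
exists e; split.
- exact: (subsetP LI).
- by move: eeK; rewrite K0 inE subr_eq0 => /eqP.
- apply: contraNneq ba0 => e0; move: ea; rewrite e0 mul0r => a0; by rewrite a0 mulr0.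
Qed.

Lemma lideal_principal n I : (#|I| <= n)%N -> lideal I -> exists g, g * g = g /\ I = lprinc g.
Proof.
elim: n I => [|n IH] I In lI.
  by move: In; rewrite leqn0 => /eqP/cards0_eq I0; move: (lideal0 lI); rewrite I0 inE.
have [I0|I0] := eqVneq I [set 0].
  exists 0; rewrite mulr0; split => //; rewrite I0; apply/setP => y; rewrite !inE.
  apply/eqP/lprincP => [->|[r ->]]; [by exists 0; rewrite mulr0| by rewrite mulr0].
have [e [eI ee e0]] := idem_in lI I0.
pose J := [set j in I | j * e == 0].
have lJ : lideal J.
  apply/lidealP; split.
  - by rewrite inE lideal0 // mul0r eqxx.
  - move=> x y; rewrite !inE => /andP[xL /eqP xa] /andP[yL /eqP ya].
    by rewrite (lidealD lI xL yL) mulrDl xa ya addr0 eqxx.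
  - move=> r x; rewrite !inE => /andP[xL /eqP xa].
    by rewrite (lidealM r lI xL) -mulrA xa mulr0 eqxx.
have JI : J \subset I by apply/subsetP => x; rewrite inE => /andP[].
have Jn : (#|J| <= n)%N.
  rewrite -ltnS; apply: leq_trans In; rewrite proper_card //; apply/properP; split => //.
  by exists e => //; rewrite inE eI ee /= (negbTE e0).
have [f [ff Jf]] := IH J Jn lJ.
have fJ : f \in J by rewrite Jf lprinc_self.
move: (fJ); rewrite inE => /andP[fI /eqP fe].
pose g := e + f - e * f.
have eg : e * g = e by rewrite /g mulrBr mulrDr mulrA ee addrK.
have fg : f * g = f by rewrite /g mulrBr mulrDr mulrA fe ff mul0r add0r subr0.
exists g; split.
  by rewrite {1}/g mulrBl mulrDl eg fg -mulrA fg.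
apply/setP => j; apply/idP/lprincP => [jI|[r ->]].
  have : j - j * e \in J.
    by rewrite inE lidealB ?lidealM //= mulrBl -mulrA ee subrr.
  rewrite Jf => /lprincP[t Ht]; exists (j * e + t * f).
  by rewrite mulrDl -!mulrA eg fg -Ht addrC subrK.
apply: lidealM => //; rewrite /g lidealB ?lidealD ?lidealM //.
Qed.

End RadZero.
End Gen.

Lemma lprinc_sub2 (R : finNzRingType) (x y : R) : y \in lprinc x -> lprinc y \subset lprinc x.
Proof. by move=> yx; apply: lprinc_sub => //; apply: lideal_lprinc. Qed.

Lemma hom_weight_unique (F : realType) (R : finNzRingType) (w v : R -> F) :
  is_hom_weight w -> is_hom_weight v -> forall x, w x = v x.
Proof.
case=> [w0 wc ws] [v0 vc vs].
suff H : forall n x, (#|lprinc x| <= n)%N -> w x = v x by move=> x; exact: H.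
elim=> [|n IH] x.
  by rewrite leqn0 => /eqP/cards0_eq E; move: (lprinc_self x); rewrite E inE.
move=> Hx; have [->|x0] := eqVneq x 0; first by rewrite w0 v0.
pose B := [set y : R | lprinc y == lprinc x].
have Ew := ws x x0; have Ev := vs x x0.
rewrite (big_setID B) /= in Ew; rewrite (big_setID B) /= in Ev.
have E2 : \sum_(i in lprinc x :\: B) w i = \sum_(i in lprinc x :\: B) v i.
  apply: eq_bigr => y; rewrite !inE => /andP[yB yx]; apply: IH.
  rewrite -ltnS; apply: leq_trans Hx; apply: proper_card; rewrite properEneq yB.
  exact: lprinc_sub2.
have E1 : forall u : R -> F, (forall a b, lprinc a = lprinc b -> u a = u b) ->
    \sum_(i in lprinc x :&: B) u i = u x *+ #|lprinc x :&: B|.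
  move=> u uc; rewrite -sumr_const; apply: eq_bigr => y; rewrite !inE => /andP[_ /eqP].
  exact: uc.
rewrite E1 // in Ew; rewrite E1 // in Ev.
move: Ew; rewrite -Ev E2 => /addIr.
rewrite -[w x *+ _]mulr_natr -[v x *+ _]mulr_natr => /mulIf; apply.
rewrite pnatr_eq0 -lt0n; apply/card_gt0P; exists x; rewrite !inE lprinc_self eqxx.
by [].
Qed.

Lemma soc_lideal (R : finNzRingType) : lideal (soc R).
Proof. by apply: lideal_bigcap => J /andP[]. Qed.

Lemma minimal_sub_soc (R : finNzRingType) (L : {set R}) : minimal_lideal L -> L \subset soc R.
Proof.
move=> mL; apply/bigcapsP => J /andP[_ /forallP H]; exact: (implyP (H L)).
Qed.

Lemma rad0_quot (R S : finNzRingType) (pi : {rmorphism R -> S}) :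
  is_quotient_by_rad pi ->
  forall s : S, (forall M, maximal_lideal M -> s \in M) -> s = 0.
Proof.
case=> surj ker s; have [x <-] := surj s => Hs; apply/eqP; rewrite ker.
apply/bigcapP => M /and3P[lM MT /forallP Hmax].
have radM : Defs.rad R \subset M.
  by rewrite /Defs.rad; apply: bigcap_inf; apply/and3P; split => //; apply/forallP.
pose N := [set pi m | m in M].
have NM : forall y, pi y \in N -> y \in M.
  move=> y /imsetP[m mM /eqP]; rewrite -subr_eq0 -rmorphB ker => /(subsetP radM) ym.
  by rewrite -(subrK m y) lidealD.
have lN : lideal N.
  apply/lidealP; split.
  - by apply/imsetP; exists 0; rewrite ?rmorph0 ?lideal0.
  - move=> a b /imsetP[u uM ->] /imsetP[v vM ->]; apply/imsetP; exists (u + v); rewrite ?rmorphD //.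
    exact: lidealD.
  - move=> r a /imsetP[u uM ->]; have [t <-] := surj r; apply/imsetP; exists (t * u); rewrite ?rmorphM //.
    exact: lidealM.
have maxN : maximal_lideal N.
  apply/and3P; split => //.
    apply/negP => /eqP NT; have : (1 : S) \in N by rewrite NT inE.
    rewrite -(rmorph1 pi) => /NM oneM; move: MT; rewrite eqEsubset subsetT /=.
    by move/negP; apply; apply/subsetP => r _; rewrite -(mulr1 r) lidealM.
  apply/forallP => J; apply/implyP => /andP[/andP[lJ NJ] JT].
  pose J' := [set y : R | pi y \in J].
  have lJ' : lideal J'.
    apply/lidealP; split.
    - by rewrite inE rmorph0 lideal0.
    - by move=> a b; rewrite !inE rmorphD; apply: lidealD.
    - by move=> r a; rewrite !inE rmorphM; apply: lidealM.
  have MJ' : M \subset J'.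
    by apply/subsetP => m mM; rewrite inE (subsetP NJ) //; apply/imsetP; exists m.
  have J'T : J' != [set: R].
    apply: contraNneq JT => E; rewrite eqEsubset subsetT /=; apply/subsetP => t _.
    have : (1 : R) \in J' by rewrite E inE.
    by rewrite inE rmorph1 => J1; rewrite -(mulr1 t) lidealM.
  have /eqP J'M : J' == M by move: (Hmax J'); rewrite lJ' MJ' J'T.
  rewrite eqEsubset NJ andbT; apply/subsetP => t tJ; have [y yt] := surj t.
  apply/imsetP; exists y => //; rewrite -J'M inE yt //.
exact: NM (Hs N maxN).
Qed.

Theorem theorem2p5 (F : realType) (R : finNzRingType) (S : finNzRingType)
    (pi : {rmorphism R -> S}) (psi : R -> S) (wt : S -> F) :
  frobenius R ->
  is_quotient_by_rad pi ->
  soc_iso pi psi ->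
  is_hom_weight wt ->
  let omega := fun x : R => if x \in soc R then wt (psi x) else 1 in
  is_hom_weight omega /\
  (forall w : R -> F, is_hom_weight w -> forall x : R, w x = omega x).
Proof.
move=> _ Hq Hiso hw omega.
have rad0 := rad0_quot Hq.
case: Hq => surj ker; case: Hiso => psiD psiM psiinj psisurj.
case: (hw) => [wt0 wtc wts].
have lsoc := soc_lideal R.
have s0 : (0 : R) \in soc R := lideal0 lsoc.
have psi0 : psi 0 = 0.
  have := psiD 0 0 s0 s0; rewrite addr0 => /(congr1 (fun z => z - psi 0)).
  by rewrite subrr addrK.
have psi_lprinc : forall x y, y \in soc R -> x \in lprinc y ->
    lprinc (psi x) \subset lprinc (psi y).
  move=> x y ys /lprincP[r ->]; apply/subsetP => t /lprincP[s ->].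
  by apply/lprincP; exists (s * pi r); rewrite psiM // mulrA.
have sum_soc : forall I, lideal I -> I \subset soc R -> I != [set 0] ->
    \sum_(y in I) wt (psi y) = (#|I|)%:R.
  move=> I lI Isoc I0.
  have injI : {in I &, injective psi}.
    by move=> a b aI bI; apply: psiinj; apply: (subsetP Isoc).
  pose J := [set psi y | y in I].
  have lJ : lideal J.
    apply/lidealP; split.
    - by apply/imsetP; exists 0; rewrite ?psi0 ?lideal0.
    - move=> a b /imsetP[u uI ->] /imsetP[v vI ->]; apply/imsetP; exists (u + v).
        exact: lidealD.
      by rewrite psiD //; apply: (subsetP Isoc).
    - move=> r a /imsetP[u uI ->]; have [t <-] := surj r; apply/imsetP; exists (t * u).
        exact: lidealM.
      by rewrite psiM //; apply: (subsetP Isoc).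
  have [y yI y0] := nonzero_set lI I0.
  have psiy0 : psi y != 0.
    apply: contraNneq y0 => E.
    by apply/eqP; apply: (psiinj _ _ (subsetP Isoc _ yI) s0); rewrite E psi0.
  have [g [_ Jg]] := lideal_principal rad0 (leqnn #|J|) lJ.
  have g0 : g != 0.
    apply: contraNneq psiy0 => g0.
    have : psi y \in J by apply/imsetP; exists y.
    by rewrite Jg g0 => /lprincP[r ->]; rewrite mulr0.
  rewrite -(big_imset _ injI) /= -/J Jg (wts g g0) -Jg.
  by rewrite card_in_imset.
have Homega : is_hom_weight omega.
  split.
  - by rewrite /omega s0 psi0 wt0.
  - move=> x y Exy.
    have xy : x \in lprinc y by rewrite -Exy lprinc_self.
    have yx : y \in lprinc x by rewrite Exy lprinc_self.
    rewrite /omega; case: ifP => xs; case: ifP => ys //.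
    + apply: wtc; apply/eqP; rewrite eqEsubset !psi_lprinc //.
    + by move: ys; rewrite (subsetP (lprinc_sub lsoc xs)).
    + by move: xs; rewrite (subsetP (lprinc_sub lsoc ys)).
  - move=> x x0.
    have lx := lideal_lprinc x.
    have Rx0 : lprinc x != [set 0].
      by apply: contraNneq x0 => E; move: (lprinc_self x); rewrite E inE.
    case xs : (x \in soc R).
      rewrite -sum_soc // ?lprinc_sub //; apply: eq_bigr => y yx.
      by rewrite /omega (subsetP (lprinc_sub lsoc xs)).
    rewrite (big_setID (soc R)) /= -(cardsID (soc R) (lprinc x)) natrD.
    congr (_ + _).
      rewrite -sum_soc.
      + by apply: eq_bigr => y; rewrite inE /omega => /andP[_ ->].
      + exact: lideal_setI.
      + exact: subsetIr.
      have [L mL Lx] := min_lideal_exists lx Rx0.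
      move: (mL) => /and3P[lL L0 _].
      have [z zL z0] := nonzero_set lL L0.
      apply: contraNneq z0 => E; have : z \in lprinc x :&: soc R.
        by rewrite inE (subsetP Lx) // (subsetP (minimal_sub_soc mL)).
      by rewrite E inE.
    rewrite -sumr_const; apply: eq_bigr => y; rewrite !inE /omega => /andP[ys _].
    by rewrite (negbTE ys).
split => // w Hw x; exact: hom_weight_unique Hw Homega x.
Qed.
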